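(* Let $g:(0,\infty)\to(0,\infty)$ decrease monotonically to zero. Let $b,m,\kappa\in\mathbb N$ with $m<|\mathfrak E(B_b)|$. If $u\mapsto u^d\,\mathbb P[w\le g(u)]^m$ is bounded from above, then for every $\epsilon\in[0,\kappa(m+\kappa)^{-1})$ $$\mathbb P\Big[\liminf_{n\to\infty}\bigcap_{\mathfrak A\subseteq\mathfrak E(B_b),\,|\mathfrak A|\ge m+\kappa}\ \bigcap_{z\in B_{n+b}}J_{g(n^{1-\epsilon})}(\mathfrak A\circ\tau_z)\Big]=1.$$
   Context: Let $d\ge2$, $\mathfrak E_d$ the nearest-neighbour edges of $\mathbb Z^d$. Conductances $(w_e)_{e\in\mathfrak E_d}$ are i.i.d. $(0,\infty)$-valued with law $\mathbb P$; $w$ a generic copy. $B_n=[-n,n]^d\cap\mathbb Z^d$. For $\alpha>0$ and $\mathfrak A\subseteq\mathfrak E_d$, $J_\alpha(\mathfrak A)=\{\exists e\in\mathfrak A: w_e>\alpha\}$. For $A\subset\mathbb Z^d$, $\mathfrak E(A)=\{\{x,x+\boldsymbol e_j\}: x\in A,\ j\in\{1,\dots,d\}\}$. For $z\in\mathbb Z^d$, $\mathfrak A\circ\tau_z=\{\{x+z,y+z\}:\{x,y\}\in\mathfrak A\}$. $\liminf_n E_n=\bigcup_n\bigcap_{k\ge n}E_k$. *)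

(* Defs.v *)
From HB Require Import structures.
From mathcomp Require Import all_boot all_order all_algebra.
From mathcomp Require Import all_classical all_reals all_analysis.
From mathcomp Require Import finmap.
Unset Printing Implicit Defensive.
Import Order.TTheory GRing.Theory Num.Theory.
Local Open Scope classical_set_scope.
Local Open Scope ring_scope.

(* Points of Z^d and nearest-neighbour edges.  The edge {x, x + e_j}
   (j : 'I_d) is represented by the pair (x, j); this is a bijection
   with the nearest-neighbour edges of Z^d. *)
Definition point (d : nat) := (d.-tuple int)%type.
Definition edge (d : nat) := (point d * 'I_d)%type.

Definition vadd (d : nat) (x z : point d) : point d :=
  [tuple tnth x i + tnth z i | i < d].

Definition box (d n : nat) : set (point d) :=
  [set x | forall i : 'I_d, `|tnth x i| <= n%:Z].

Definition edges_of (d : nat) (A : set (point d)) : set (edge d) :=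
  [set e | A e.1].

Definition etranslate (d : nat) (A : set (edge d)) (z : point d) : set (edge d) :=
  (fun e : edge d => (vadd d e.1 z, e.2)) @` A.

Definition ecard (d : nat) (A : set (edge d)) : nat := (#|` fset_set A|)%fset.

Definition J_event (R : realType) (d : nat) (T : Type)
  (w : edge d -> T -> R) (alpha : R) (A : set (edge d)) : set T :=
  [set t | exists2 e, A e & alpha < w e t].

Definition liminf_set (T : Type) (E : nat -> set T) : set T :=
  [set t | exists N, forall n, (N <= n)%N -> E n t].

(* (w_e) are i.i.d. random variables on (T, P) with common law mu:
   each is measurable, has law mu, and they are mutually independent
   (product rule for every finite family of distinct edges). *)
Definition iid_with_law (R : realType) (dm : measure_display)
  (T : measurableType dm) (P : probability T R) (d : nat)
  (w : edge d -> T -> R) (mu : probability R R) : Prop :=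
  [/\ (forall e, measurable_fun setT (w e)),
      (forall e (B : set R), measurable B -> P (w e @^-1` B) = mu B) &
      (forall (s : seq (edge d)) (B : edge d -> set R), uniq s ->
         (forall e, measurable (B e)) ->
         P (\big[setI/setT]_(e <- s) (w e @^-1` B e)) =
         (\prod_(e <- s) P (w e @^-1` B e))%E)].

(* Main.v *)
Require Import Defs.
From HB Require Import structures.
From mathcomp Require Import all_boot all_order all_algebra.
From mathcomp Require Import all_classical all_reals all_analysis.
From mathcomp Require Import finmap.
From mathcomp Require Import zify ring lra.
Import Order.TTheory GRing.Theory Num.Theory.
Local Open Scope classical_set_scope.
Local Open Scope ring_scope.

Lemma bigU_mem (I : choiceType) (U : Type) (s : seq I) (P : pred I) (F : I -> set U) x :
  (\big[setU/set0]_(i <- s | P i) F i) x <-> exists2 i, (i \in s) && P i & F i x.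
Proof.
rewrite -bigcup_seq_cond; split; by move=> [i Hi Fi]; exists i.
Qed.

Lemma bigI_mem (I : choiceType) (U : Type) (s : seq I) (F : I -> set U) x :
  (\big[setI/setT]_(i <- s) F i) x <-> forall i, i \in s -> F i x.
Proof.
rewrite -bigcap_seq; split => [H i Hi|H i Hi]; first exact: H.
exact: H.
Qed.

Section Comb.
Context (d : nat).

Definition tr (z : Defs.point d) (e : Defs.edge d) : Defs.edge d := (vadd d e.1 z, e.2).

Definition zpt (N : nat) (f : {ffun 'I_d -> 'I_(2*N).+1}) : Defs.point d :=
  [tuple ((f i : nat)%:Z - N%:Z) | i < d].

Lemma box_zpt N f : box d N (zpt N f).
Proof.
move=> i; rewrite tnth_mktuple; have := ltn_ord (f i); rewrite ltnS; lia.
Qed.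

Lemma zpt_surj N z : box d N z -> exists f, zpt N f = z.
Proof.
move=> bz.
exists [ffun i => inord (absz (tnth z i + N%:Z)%R) : 'I_(2*N).+1].
apply: eq_from_tnth => i; rewrite tnth_mktuple ffunE.
have bzi : (`|(tnth z i : int)| <= N%:Z)%R := bz i.
rewrite inordK; last by rewrite ltnS; lia.
lia.
Qed.

Lemma box_mono N N' z : (N <= N')%N -> box d N z -> box d N' z.
Proof. by move=> NN' bz i; apply: (le_trans (bz i)); rewrite lez_nat. Qed.

Lemma vadd_inj z : injective (fun x => vadd d x z).
Proof.
move=> x y /(congr1 (fun t => tnth t)) H; apply: eq_from_tnth => i.
have := congr1 (fun f => f i) H; rewrite /= /vadd !tnth_mktuple.
by move/addIr.
Qed.

Lemma tr_inj z : injective (tr z).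
Proof.
move=> [x j] [y k] H.
have H1 := congr1 fst H; have H2 := congr1 snd H; simpl in H1, H2.
by rewrite (vadd_inj z _ _ H1) H2.
Qed.

Lemma edges_box_finite N : finite_set (edges_of d (box d N)).
Proof.
have -> : edges_of d (box d N) =
  (fun fj : {ffun 'I_d -> 'I_(2*N).+1} * 'I_d => (zpt N fj.1, fj.2)) @` setT.
  apply/seteqP; split => [[x j] bx|].
    have [f fx] := zpt_surj _ _ bx; exists (f, j) => //=; by rewrite fx.
  move=> _ [[f j] _ <-]; exact: box_zpt.
apply: finite_image; exact: finite_finset.
Qed.

End Comb.
Arguments tr {d} z e.
Arguments zpt {d N} f.
Arguments box_zpt {d N} f.
Arguments zpt_surj {d N z}.
Arguments box_mono {d N N' z}.
Arguments tr_inj {d} z.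

Section Prob.
Context (R : realType) (d : nat) (dm : measure_display) (T : measurableType dm)
  (P : probability T R) (w : Defs.edge d -> T -> R) (mu : probability R R)
  (b M : nat).
Context (Hiid : iid_with_law R dm T P d w mu).

Lemma measure_bigU (I : Type) (s : seq I) (F : I -> set T) :
  (forall i, measurable (F i)) ->
  (P (\big[setU/set0]_(i <- s) F i) <= \sum_(i <- s) P (F i))%E.
Proof.
move=> mF; elim: s => [|a s IH]; first by rewrite !big_nil measure0.
rewrite !big_cons; apply: le_trans (measureU2 _ _ _) _.
- exact: mF.
- by apply: bigsetU_measurable => i _; exact: mF.
- exact: leeD2l.
Qed.

Lemma sum_const_seq (I : Type) (s : seq I) (x : R) :
  \sum_(i <- s) x = x *+ size s.
Proof. by elim: s => [|a s IH]; rewrite ?big_nil ?big_cons ?IH ?mulrS. Qed.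

Lemma prod_const_seq (I : Type) (s : seq I) (x : R) :
  \prod_(i <- s) x = x ^+ size s.
Proof. by elim: s => [|a s IH]; rewrite ?big_nil ?big_cons ?IH ?exprS. Qed.

Lemma mpre e G : measurable (w e @^-1` `]-oo, G]).
Proof.
case: Hiid => mw _ _; rewrite -[X in measurable X]setTI.
by apply: (mw e) => //; exact: measurable_itv.
Qed.

Definition Sb : {fset Defs.edge d} := fset_set (edges_of d (box d b)).
Definition Fl : seq {fset Defs.edge d} :=
  [seq B <- (fpowerset Sb : seq _) | (M <= #|` B|)%N].

Definition Badset (N : nat) (G : R) : set T :=
  \big[setU/set0]_(B <- Fl) \big[setU/set0]_(f : {ffun 'I_d -> 'I_(2*N).+1})
     \big[setI/setT]_(e <- B) (w (tr (zpt f) e) @^-1` `]-oo, G]).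

Lemma Badset_meas N G : measurable (Badset N G).
Proof.
apply: bigsetU_measurable => B _; apply: bigsetU_measurable => f _.
apply: bigsetI_measurable => e _; exact: mpre.
Qed.

Lemma Badset_char N G t : Badset N G t <->
  exists2 B, B \in Fl & exists2 z, box d N z &
    forall e, e \in B -> w (tr z e) t <= G.
Proof.
split.
- move=> /bigU_mem [B /andP[BF _]] /bigU_mem [f _] /bigI_mem H.
  exists B => //; exists (zpt f); first exact: box_zpt.
  move=> e eB; have := H e eB; rewrite /= in_itv /=; by [].
- move=> [B BF [z bz H]]; apply/bigU_mem; exists B; first by rewrite BF.
  have [f fz] := zpt_surj bz; apply/bigU_mem; exists f.
    by rewrite mem_index_enum.
  apply/bigI_mem => e eB /=; rewrite in_itv /= fz; exact: H.
Qed.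

Lemma Badset_mono N N' G G' : (N <= N')%N -> G <= G' ->
  Badset N G `<=` Badset N' G'.
Proof.
move=> NN GG t /Badset_char [B BF [z bz H]]; apply/Badset_char.
exists B => //; exists z; first exact: box_mono bz.
move=> e eB; exact: le_trans (H e eB) GG.
Qed.

Definition Fam := [set A : set (Defs.edge d) |
  A `<=` edges_of d (box d b) /\ (M <= ecard d A)%N].

Lemma J_eq N G :
  \bigcap_(A in Fam) \bigcap_(z in box d N)
     J_event R d T w G (etranslate d A z) = ~` Badset N G.
Proof.
have fin := edges_box_finite d b.
apply/seteqP; split => t.
- move=> HL /Badset_char [B BF [z bz H]].
  move: BF; rewrite mem_filter => /andP[MB]; rewrite fpowersetE => BS.
  have FA : Fam [set` B].
    split; last by rewrite /ecard set_fsetK.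
    move=> e /= eB; have := fsubsetP BS e eB.
    rewrite /Sb in_fset_set //; exact: set_mem.
  have [e' [e eB <-] He] := HL _ FA z bz.
  have := H e eB; rewrite leNgt.
  by move/negP; apply.
- move=> nB A [Asub MA] z bz.
  have finA : finite_set A := sub_finite_set Asub fin.
  case: (pselect (J_event R d T w G (etranslate d A z) t)) => // nJ.
  exfalso; apply: nB; apply/Badset_char; exists (fset_set A).
    rewrite mem_filter; apply/andP; split; first exact: MA.
    rewrite fpowersetE /Sb -fset_set_sub //.
  exists z => // e; rewrite in_fset_set // => /set_mem Ae.
  rewrite leNgt; apply/negP => Hlt; apply: nJ.
  exists (tr z e) => //; by exists e.
Qed.

Lemma Badset_bound N G :
  (P (Badset N G) <=
    ((size Fl * expn (2*N+1) d)%N%:R * (fine (mu `]-oo, G]%classic))^+M)%:E)%E.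
Proof.
case: Hiid => mw law indep.
set p := fine (mu `]-oo, G]%classic).
have mI : measurable (`]-oo, G]%classic : set R) by exact: measurable_itv.
have pE : mu `]-oo, G]%classic = p%:E by rewrite /p fineK //; exact: fin_num_measure.
have p0 : 0 <= p by rewrite -lee_fin -pE measure_ge0.
have p1 : p <= 1.
  rewrite -lee_fin -pE -(probability_setT mu); exact: (le_measure _ (mem_set mI) (mem_set measurableT)).
have key : forall B, B \in Fl -> forall (f : {ffun 'I_d -> 'I_(2*N).+1}),
   (P (\big[setI/setT]_(e <- B) (w (tr (zpt f) e) @^-1` `]-oo, G])) <= (p ^+ M)%:E)%E.
  move=> B BF f.
  move: BF; rewrite mem_filter => /andP[MB _].
  have := indep (map (tr (zpt f)) B) (fun _ => `]-oo, G]%classic).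
  rewrite !big_map => ->; first last.
  - by move=> _.
  - by rewrite map_inj_uniq ?fset_uniq //; exact: tr_inj.
  under eq_bigr do rewrite law // pE.
  rewrite prodEFin prod_const_seq lee_fin.
  exact: ler_wiXn2l.
apply: (@le_trans _ _ (\sum_(B <- Fl) \sum_(f : {ffun 'I_d -> 'I_(2*N).+1}) (p ^+ M)%:E)%E).
  apply: le_trans; first (apply: measure_bigU => B; apply: bigsetU_measurable => f _;
    apply: bigsetI_measurable => e _; exact: mpre).
  rewrite big_seq_cond [X in (_ <= X)%E]big_seq_cond; apply: lee_sum => B /andP[BF _].
  apply: le_trans; first (apply: measure_bigU => f;
    apply: bigsetI_measurable => e _; exact: mpre).
  apply: lee_sum => f _; exact: key.
under eq_bigr do rewrite sumEFin.
rewrite sumEFin lee_fin sumr_const card_ffun !card_ord sum_const_seq.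
by rewrite -mulrnA mulr_natl addn1 mulnC.
Qed.
End Prob.

Lemma real_bound (R : realType) (d m M : nat) (eps C U p : R) :
  (0 < m)%N -> 1 <= U -> 0 <= p -> 0 <= eps <= 1 ->
  (U `^ (1-eps)) ^+ d * p ^+ m <= C ->
  p ^+ M * U ^+ d <=
    C `^ (M%:R / m%:R) * U `^ (d%:R * (1 - (1-eps) * (M%:R / m%:R))).
Proof.
move=> m0 U1 p0 /andP[e0 e1] H.
set r := M%:R / m%:R.
have U0 : 0 < U by apply: lt_le_trans U1.
have r0 : 0 <= r by rewrite /r divr_ge0.
have hu : (U `^ (1-eps)) ^+ d = U `^ ((1-eps) * d%:R).
  by rewrite -powR_mulrn ?powR_ge0 // -powRrM.
have m0' : (m%:R : R) != 0 by rewrite pnatr_eq0 -lt0n.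
have hp : p ^+ M = (p ^+ m) `^ r.
  by rewrite -!powR_mulrn // -powRrM /r mulrC divfK.
have C0 : 0 <= C.
  by apply: le_trans H; rewrite mulr_ge0 ?exprn_ge0 ?powR_ge0.
have H1 : (U `^ ((1-eps) * d%:R) * p ^+ m) `^ r <= C `^ r.
  apply: ge0_ler_powR => //; rewrite ?nnegrE -?hu //.
  by rewrite mulr_ge0 ?exprn_ge0 ?powR_ge0.
rewrite powRM ?powR_ge0 ?exprn_ge0 // -powRrM -hp in H1.
have Ud : U ^+ d = U `^ ((1-eps) * d%:R * r) * U `^ (d%:R * (1 - (1-eps) * r)).
  rewrite -powRD; last by apply/implyP => _; rewrite gt_eqF.
  rewrite -powR_mulrn ?ltW //; congr (_ `^ _); ring.
rewrite Ud mulrA; apply: ler_wpM2r; first exact: powR_ge0.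
by rewrite mulrC.
Qed.

Lemma tail_bound (R : realType) (c q : R) K : 0 <= c -> 0 < q < 1 ->
  (\sum_(K <= k <oo) ((c * q ^+ k)%:E) <= (c * q ^+ K / (1 - q))%:E)%E.
Proof.
move=> c0 /andP[q0 q1].
apply: lime_le.
  by apply: is_cvg_nneseries => n _ _; rewrite lee_fin mulr_ge0 // exprn_ge0 // ltW.
near=> n.
rewrite sumEFin lee_fin.
case: (leqP n K) => nK.
  rewrite bigop.big_geq //; apply: divr_ge0; last by rewrite subr_ge0 ltW.
  by rewrite mulr_ge0 // exprn_ge0 // ltW.
rewrite -(subnKC (ltnW nK)) -mulr_sumr geometric_partial_tail -mulrA.
apply: ler_wpM2l => //; apply: geometric_le_lim => //.
  by rewrite exprn_ge0 // ltW.
by rewrite ger0_norm // ltW.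
Unshelve. all: by end_near.
Qed.

Lemma zero_of_bound (R : realType) (x c q : R) : 0 < q < 1 ->
  (forall K, x <= c * q ^+ K) -> x <= 0.
Proof.
move=> /andP[q0 q1] H.
have cv : (fun K => c * q ^+ K) @ \oo --> 0.
  by have := @cvg_geometric R c q; rewrite ger0_norm ?ltW //; apply.
apply: (cvgr_to_ge cv).
by near=> K; exact: H.
Unshelve. all: by end_near.
Qed.

Lemma cnt_nat (k b d : nat) : (1 < d)%N ->
  (expn (2*(2^k.+1+b)+1) d <= expn (5+2*b) d * expn (2^k) d)%N.
Proof.
move=> d2; rewrite -expnMn leq_exp2r; last by apply: ltnW.
rewrite expnS; set X := (2^k)%N.
have X1 : (0 < X)%N by rewrite expn_gt0.
have h : (2*b <= 2*b*X)%N := leq_pmulr _ X1.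
rewrite mulnDl; lia.
Qed.

Theorem corollary2p3 (R : realType) (d : nat) (dm : measure_display)
  (T : measurableType dm) (P : probability T R)
  (w : edge d -> T -> R) (mu : probability R R) (g : R -> R)
  (b m kappa : nat) (eps : R) :
  (2 <= d)%N ->
  iid_with_law R dm T P d w mu ->
  (forall e t, 0 < w e t) ->
  (forall u, 0 < u -> 0 < g u) ->
  (forall u v, 0 < u -> u <= v -> g v <= g u) ->
  (g x @[x --> +oo%R] --> 0%R) ->
  (m < ecard d (edges_of d (box d b)))%N ->
  (exists C : R, forall u, 0 < u ->
     u ^+ d * (fine (mu `]-oo, g u]%classic)) ^+ m <= C) ->
  0 <= eps -> eps < kappa%:R / (m + kappa)%:R ->
  P (liminf_set T (fun n : nat =>
       \bigcap_(A in [set A : set (edge d) |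
                        A `<=` edges_of d (box d b) /\ (m + kappa <= ecard d A)%N])
         \bigcap_(z in box d (n + b))
           J_event R d T w (g (powR n%:R (1 - eps))) (etranslate d A z))) = 1%E.
Proof.
move=> d2 Hiid wpos gpos gmono glim mlt [C HC] e0 eK.
set M := (m + kappa)%N.
have kpos : (0 < kappa)%N.
  rewrite lt0n; apply/negP => /eqP k0.
  by move: eK; rewrite k0 mul0r => /(le_lt_trans e0); rewrite ltxx.
have Mpos : (0 < M)%N by rewrite /M; lia.
have MR : (0 : R) < M%:R by rewrite ltr0n.
have e1 : eps < 1.
  apply: (lt_le_trans eK); rewrite ler_pdivrMr ?ltr0n // mul1r ler_nat; lia.
have pge0 : forall G, 0 <= fine (mu `]-oo, G]%classic) by move=> G; rewrite fine_ge0.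
have mpos : (0 < m)%N.
  rewrite lt0n; apply/negP => /eqP m0.
  have := HC (`|C| + 1) (ltr_wpDl (normr_ge0 _) ltr01).
  rewrite m0 expr0 mulr1 => H.
  have H2 : `|C| + 1 <= (`|C| + 1) ^+ d.
    by apply: ler_eXnr; [lia | rewrite lerDr].
  have := le_trans H2 H; rewrite -subr_ge0 opprD addrA.
  have := ler_norm C; lra.
have C0 : 0 <= C.
  apply: le_trans (HC 1 ltr01); by rewrite expr1n mul1r exprn_ge0.
set Gn := fun n : nat => g (powR n%:R (1 - eps)).
set Bad := fun n : nat => Badset R d dm T w b M (n + b) (Gn n).
have Eeq : (fun n : nat =>
       \bigcap_(A in [set A : set (edge d) |
                        A `<=` edges_of d (box d b) /\ (m + kappa <= ecard d A)%N])
         \bigcap_(z in box d (n + b))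
           J_event R d T w (g (powR n%:R (1 - eps))) (etranslate d A z))
    = fun n => ~` Bad n.
  by apply/funext => n; exact: J_eq.
rewrite Eeq; set L := liminf_set T (fun n => ~` Bad n).
have Lmeas : measurable L.
  have -> : L = \bigcup_(N in setT) \bigcap_(n in [set n | (N <= n)%N]) ~` Bad n.
    apply/seteqP; split => t.
      by move=> [N HN]; exists N => // n Nn; exact: HN.
    by move=> [N _ HN]; exists N => n; exact: HN.
  apply: bigcup_measurable => N _; apply: bigcap_measurable.
    by exists N => /=.
  by move=> n _; apply: measurableC; exact: (@Badset_meas R d dm T P w mu b M Hiid).
have -> : L = ~` (~` L) by rewrite setCK.
rewrite probability_setC; last exact: measurableC.
suff -> : P (~` L) = 0%E by rewrite sube0.
set r : R := M%:R / m%:R.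
set a : R := d%:R * (1 - (1 - eps) * r).
set q : R := 2 `^ a.
set c1 : R := (size (Fl d b M) * expn (5 + 2*b) d)%N%:R.
set c0 : R := c1 * C `^ r.
set Bad' := fun k : nat =>
  Badset R d dm T w b M (2^k.+1 + b) (g (powR (2^k)%:R (1 - eps))).
have mR : (0 : R) < m%:R by rewrite ltr0n.
have aneg : a < 0.
  rewrite /a pmulr_rlt0 ?ltr0n; last lia.
  rewrite subr_lt0 /r.
  have : eps * M%:R < kappa%:R by rewrite -ltr_pdivlMr.
  rewrite mulrA ltr_pdivlMr // mul1r /M natrD; lra.
have q0 : 0 < q by rewrite powR_gt0.
have q1 : q < 1.
  have : q <= 1.
    apply: (@le_trans _ _ (2 `^ 0)); last by rewrite powRr0.
    apply: ler_powR; [by rewrite ler1n | exact: ltW].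
  rewrite le_eqVlt => /orP[|//].
  rewrite /q powR_eq1 => /orP[/eqP H|/orP[H|/eqP H]].
  - by move: H; lra.
  - by move: H; lra.
  - by move: aneg; rewrite H ltxx.
have c00 : 0 <= c0 by rewrite /c0 mulr_ge0 ?powR_ge0.
have bound : forall k, (P (Bad' k) <= (c0 * q ^+ k)%:E)%E.
  move=> k.
  apply: le_trans (@Badset_bound R d dm T P w mu b M Hiid _ _) _.
  rewrite lee_fin.
  set U : R := (2^k)%:R.
  set u := U `^ (1 - eps).
  have U1 : 1 <= U by rewrite /U ler1n expn_gt0.
  have upos : 0 < u by rewrite /u powR_gt0 // (lt_le_trans ltr01 U1).
  set p := fine (mu `]-oo, g u]%classic).
  have RB := @real_bound R d m M eps C U p mpos U1 (pge0 _) _ (HC u upos).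
  have {RB} RB := RB ltac:(by rewrite e0 ltW).
  have cnt : ((size (Fl d b M) * expn (2*(2^k.+1+b)+1) d)%N%:R : R) <= c1 * U ^+ d.
    rewrite /c1 /U -natrX -natrM ler_nat -mulnA leq_mul2l.
    by rewrite (cnt_nat k b d d2) orbT.
  have Ua : U `^ a = q ^+ k.
    rewrite /U natrX -powR_mulrn // -powRrM mulrC powRrM powR_mulrn //.
  apply: le_trans (ler_wpM2r (exprn_ge0 _ (pge0 _)) cnt) _.
  rewrite -mulrA [U ^+ d * _]mulrC /c0 -mulrA -Ua; apply: ler_wpM2l => //.
have Bmeas' : forall k, measurable (Bad' k).
  by move=> k; exact: (@Badset_meas R d dm T P w mu b M Hiid).
have incl : forall K, ~` L `<=` \bigcup_(k in ~` `I_K) Bad' k.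
  move=> K t nL.
  have [n [Nn Bn]] : exists n, (2^K <= n)%N /\ Bad n t.
    apply: contrapT => H; apply: nL; exists (2^K)%N => n Nn Bn; apply: H.
    by exists n.
  have n0 : (0 < n)%N by apply: leq_trans Nn; rewrite expn_gt0.
  have /andP[kn nk] := trunc_log_bounds (isT : (1 < 2)%N) n0.
  set k := trunc_log 2 n in kn nk.
  exists k.
    move=> /=; apply/negP; rewrite -leqNgt; exact: trunc_log_max.
  have HM := @Badset_mono R d dm T w b M (n + b) (2^k.+1 + b)%N (Gn n)
    (g (powR (2^k)%:R (1 - eps))).
  apply: (HM _ _ t Bn); first by rewrite leq_add2r ltnW.
  rewrite /Gn; apply: gmono.
    by rewrite powR_gt0 // ltr0n expn_gt0.
  apply: ge0_ler_powR; rewrite ?nnegrE ?subr_ge0 ?ler0n ?ler_nat //; exact: ltW.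
have tailK : forall K, (P (~` L) <= (c0 / (1 - q) * q ^+ K)%:E)%E.
  move=> K.
  apply: le_trans (measure_sigma_subadditive_tail P Bmeas' (measurableC Lmeas) (incl K)) _.
  have TB := @tail_bound R c0 q K c00 ltac:(by rewrite q0 q1).
  apply: le_trans (le_trans _ TB) _; last by rewrite lee_fin mulrAC.
  apply: lee_nneseries.
    by move=> i _ _; exact: measure_ge0.
  by move=> k _; exact: bound.
have fin : P (~` L) \is a fin_num.
  by apply: fin_num_measure; exact: measurableC.
rewrite -(fineK fin); congr (_%:E).
apply: le_anti; rewrite fine_ge0 ?measure_ge0 // andbT.
apply: (@zero_of_bound R _ (c0 / (1 - q)) q); first by rewrite q0 q1.
by move=> K; rewrite -lee_fin fineK //; exact: tailK.
Qed.
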